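(* Fix integers $2\le k\le n$, $M=\lceil n/k\rceil$, and let the shadow images $1,\ldots,n$ be split into $M$ groups, group $j$ consisting of images $(j-1)k+1,\ldots,\min(jk,n)$; write $|\mathcal{G}_M|=n-(M-1)k$ for the size of the last group. Let $\vec\lambda=(\lambda_1,\ldots,\lambda_M)$ be a valid partition of $t=\sum_i\lambda_i$, and write its multiset of components as $\{l_1^{d_1},\ldots,l_r^{d_r}\}$, where $l_1,\ldots,l_r$ are the distinct values among $\lambda_1,\ldots,\lambda_M$ and $d_g$ is the multiplicity of $l_g$. Let $\beta_{\vec\lambda}$ be the probability that a uniformly random $t$-element subset of the $n$ shadow images contains, from groups $1,\ldots,M$, numbers of images forming a rearrangement of $\vec\lambda$ (i.e., a vector $(\lambda_{\varphi(1)},\ldots,\lambda_{\varphi(M)})$ for some permutation $\varphi$). Then $$\beta_{\vec\lambda}=\frac{1}{\binom{n}{t}}\sum_{g=1}^{r}\left[\binom{|\mathcal{G}_M|}{l_g}\,\frac{\prod_{i=1}^{r}\binom{k}{l_i}^{d_i}}{\binom{k}{l_g}}\cdot\frac{(M-1)!}{d_1!\cdots d_{g-1}!\,(d_g-1)!\,d_{g+1}!\cdots d_r!}\right],$$ with the convention $\binom{a}{b}=0$ when $b>a$.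
   Context: A valid partition is a vector $\vec\lambda=(\lambda_1,\ldots,\lambda_M)$ of non-negative integers with $\max_j\lambda_j\le k$ and $\lambda_M\le n-(M-1)k$. *)

(* Defs.v *)
From mathcomp Require Import all_boot all_order all_algebra.
Set Implicit Arguments. Unset Strict Implicit. Unset Printing Implicit Defensive.
Import GRing.Theory Num.Theory.

(* Number of groups M = ceil(n/k) (for k >= 1). *)
Definition ngroups (n k : nat) : nat := (n + k.-1) %/ k.

Definition last_size (n k : nat) : nat := n - (ngroups n k).-1 * k.

(* Images are 0-indexed: image i (0 <= i < n) lies in group i %/ k
   (groups 0-indexed: 0..M-1). *)
Definition group_counts (n k : nat) (S : {set 'I_n}) : seq nat :=
  [seq #|[set i in S | (val i) %/ k == j]| | j <- iota 0 (ngroups n k)].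

Definition valid_partition (n k : nat) (lam : seq nat) : bool :=
  [&& size lam == ngroups n k,
      all (fun x => x <= k) lam &
      nth 0 lam (ngroups n k).-1 <= last_size n k].

Definition beta (n k : nat) (lam : seq nat) : rat :=
  (#|[set S : {set 'I_n} | (#|S| == sumn lam) && perm_eq (group_counts k S) lam]|%:R
     / ('C(n, sumn lam))%:R)%R.

(* Main.v *)
Require Import Defs.
From mathcomp Require Import all_boot all_order all_algebra.
From mathcomp Require Import zify.
Set Implicit Arguments. Unset Strict Implicit. Unset Printing Implicit Defensive.
Import GRing.Theory Num.Theory.

Lemma sum_count_undup (T : eqType) (s : seq T) :
  \sum_(x <- undup s) count_mem x s = size s.
Proof.
rewrite -[RHS](perm_size (perm_count_undup s)) size_flatten /shape -map_comp sumnE big_map.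
by apply: eq_bigr => x _ /=; rewrite size_nseq.
Qed.

Lemma size_perms_fact (T : eqType) (u : seq T) n : forall s : seq T,
  size s = n -> uniq u -> {subset s <= u} ->
  size (permutations s) * \prod_(x <- u) (count_mem x s)`! = (size s)`!.
Proof.
elim: n => [|n IH] s Hs Uu Su.
  case: s Hs Su => // _ _; rewrite big1 // => x _.
have s0 : 0 < size s by rewrite Hs.
rewrite (perm_size (permutationsE s0)) size_allpairs_dep sumnE big_map big_distrl /=.
rewrite Hs factS mulnC -Hs -(sum_count_undup s) big_distrr /=.
rewrite big_seq_cond [RHS]big_seq_cond; apply: eq_bigr => x; rewrite andbT mem_undup => xs.
have xu := Su _ xs.
rewrite (bigD1_seq x xu Uu) /=.
have -> : \prod_(y <- u | y != x) (count_mem y s)`! = \prod_(y <- u | y != x) (count_mem y (rem x s))`!.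
  apply: eq_bigr => y yx; rewrite count_rem xs /= eq_sym (negbTE yx) subn0 //.
have cx : 0 < count_mem x s by rewrite -has_count has_pred1.
have -> : (count_mem x s)`! = count_mem x s * (count_mem x (rem x s))`!.
  by rewrite count_rem xs /= ?eqxx subn1 -{1}(prednK cx) factS prednK.
have Hr : size (rem x s) = n by rewrite size_rem // Hs.
have H := IH (rem x s) Hr Uu (fun y yr => Su y (mem_rem yr)).
rewrite (bigD1_seq x xu Uu) /= Hr in H.
rewrite -H; lia.
Qed.


Lemma div_eq_iff m k j : 0 < k -> (m %/ k == j) = (j * k <= m) && (m < j.+1 * k).
Proof.
move=> k0; rewrite eqn_leq -ltnS ltn_divLR // leq_divRL // andbC //.
Qed.

Lemma card_G_gen n k j : 0 < k ->
  #|[set i : 'I_n | val i %/ k == j]| = minn n (j.+1 * k) - minn n (j * k).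
Proof.
move=> k0.
rewrite -sum1_card (big_mkcond) /=.
under eq_bigr => i _ do rewrite inE.
rewrite -(big_mkord xpredT (fun i => if i %/ k == j then 1 else 0)).
elim: n => [|m IH]; first by rewrite big_geq // !min0n.
rewrite big_nat_recr //= IH div_eq_iff // mulSn.
case: ifP => /andP; lia.
Qed.

Lemma ngroups_facts n k : 0 < k -> k <= n ->
  [/\ 0 < ngroups n k, (ngroups n k).-1 * k < n & n <= ngroups n k * k].
Proof.
move=> k0 kn.
have H1 := leq_trunc_div (n + k.-1) k.
have H2 := ltn_ceil (n + k.-1) k0.
rewrite /ngroups; set M := (n + k.-1) %/ k in H1 H2 *.
rewrite mulSn in H2.
have M0 : 0 < M by rewrite /M divn_gt0 //; lia.
split => //.
  rewrite -(prednK M0) mulSn in H1; lia.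
lia.
Qed.

Lemma gcP n k (S : {set 'I_n}) (mu : seq nat) : size mu = ngroups n k ->
  (group_counts k S == mu) =
  [forall j : 'I_(ngroups n k), #|[set i in S | val i %/ k == val j]| == nth 0 mu j].
Proof.
move=> Hs; apply/eqP/forallP => [<- j | H].
  by rewrite /group_counts (nth_map 0) ?size_iota // nth_iota.
apply: (@eq_from_nth _ 0); first by rewrite size_map size_iota.
move=> j; rewrite size_map size_iota => jM.
have := eqP (H (Ordinal jM)).
by rewrite /group_counts (nth_map 0) ?size_iota // nth_iota.
Qed.

Lemma card_gc n k (mu : seq nat) : 0 < k -> k <= n -> size mu = ngroups n k ->
  #|[set S : {set 'I_n} | group_counts k S == mu]| =
  \prod_(j < ngroups n k) 'C(#|[set i : 'I_n | val i %/ k == val j]|, nth 0 mu j).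
Proof.
move=> k0 kn Hs.
have [M0 HM1 HM2] := ngroups_facts k0 kn.
set M := ngroups n k in Hs M0 HM1 HM2 *.
pose G (j : 'I_M) := [set i : 'I_n | val i %/ k == val j].
pose F := fun j : 'I_M => [pred A : {set 'I_n} | (A \subset G j) && (#|A| == nth 0 mu j)].
pose Phi (f : {ffun 'I_M -> {set 'I_n}}) := \bigcup_(j < M) f j.
have key : forall f, f \in family F -> forall j, Phi f :&: G j = f j.
  move=> f /familyP fF j; apply/setP => i; rewrite inE; apply/idP/idP.
    case/andP => /bigcupP [j' _ ij'] ij.
    have /andP [/subsetP sub _] := fF j'.
    have := sub _ ij'; rewrite !inE => /eqP e1.
    move: ij; rewrite inE e1 => /eqP e2.
    by have -> : j = j' by apply: val_inj.
  move=> ij; apply/andP; split; first by apply/bigcupP; exists j.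
  by have /andP [/subsetP sub _] := fF j; apply: sub.
have inj : {in family F &, injective Phi}.
  move=> f g Ff Fg e; apply/ffunP => j.
  by rewrite -(key f Ff) -(key g Fg) e.
have -> : [set S : {set 'I_n} | group_counts k S == mu] = Phi @: (family F).
  apply/setP => S; rewrite inE (gcP _ Hs); apply/idP/imsetP.
    move/forallP => H.
    exists [ffun j => S :&: G j].
      apply/familyP => j; rewrite ffunE inE subsetIr /=.
      have <- := eqP (H j); apply/eqP; apply: eq_card => i.
      by rewrite /G !inE andbC.
    apply/setP => i; apply/idP/bigcupP.
      move=> iS.
      have iM : val i %/ k < M by rewrite ltn_divLR //; apply: leq_trans HM2; apply: ltn_ord.
      by exists (Ordinal iM) => //; rewrite ffunE !inE iS /=.
    by case=> j _; rewrite ffunE inE => /andP [].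
  move=> [f Ff ->]; apply/forallP => j.
  have <- : #|f j| = nth 0 mu j by have /andP [_ /eqP] := (familyP Ff) j.
  rewrite -(key f Ff); apply/eqP; apply: eq_card => i; by rewrite /G !inE.
rewrite (card_in_imset inj) card_family.
rewrite foldrE big_map big_enum /=.
apply: eq_bigr => j _.
rewrite -cards_draws; apply: eq_card => A; by rewrite !inE.
Qed.


Lemma sum_eq_lt x M : \sum_(0 <= j < M) (x == j : nat) = (x < M).
Proof.
elim: M => [|M IH]; first by rewrite big_geq.
rewrite big_nat_recr //= IH ltnS leq_eqVlt.
case: (ltngtP x M) => //= h; lia.
Qed.

Lemma card_sumn n k (S : {set 'I_n}) : 0 < k -> k <= n ->
  #|S| = sumn (group_counts k S).
Proof.
move=> k0 kn; have [M0 HM1 HM2] := ngroups_facts k0 kn.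
rewrite /group_counts sumnE big_map.
under eq_bigr => j _ do rewrite -sum1_card big_mkcond /=.
rewrite exchange_big /= -sum1_card big_mkcond /=.
apply: eq_bigr => i _.
under eq_bigr => j _ do rewrite inE.
case: (i \in S) => /=; last by rewrite big1.
have -> : \sum_(j <- iota 0 (ngroups n k)) (if val i %/ k == j then 1 else 0)
   = nat_of_bool (val i %/ k < ngroups n k).
  rewrite -sum_eq_lt /index_iota subn0; apply: eq_bigr => j _; by case: (_ == _).
by rewrite ltn_divLR // (leq_trans (ltn_ord i) HM2).
Qed.

Lemma sumr_const_seq (R : nmodType) (T : Type) (r : seq T) (c : R) :
  (\sum_(t <- r) c = c *+ size r)%R.
Proof. by elim: r => [|a r IH]; rewrite ?big_nil ?big_cons ?IH ?mulrS. Qed.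

Lemma card_mu n k (lam mu : seq nat) : 0 < k -> k <= n ->
  size lam = ngroups n k -> all (fun x => x <= k) lam -> perm_eq mu lam ->
  (#|[set S : {set 'I_n} | group_counts k S == mu]|%:R : rat) =
  ('C(last_size n k, nth 0 mu (ngroups n k).-1)%:R
   * (\prod_(l' <- undup lam) (('C(k, l'))%:R ^+ count_mem l' lam))
   / ('C(k, nth 0 mu (ngroups n k).-1))%:R)%R.
Proof.
move=> k0 kn Hs Hall Hp.
have Hsm : size mu = ngroups n k by rewrite (perm_size Hp).
have [M0 HM1 HM2] := ngroups_facts k0 kn.
rewrite (card_gc k0 kn Hsm) /last_size.
move: HM1 HM2 Hsm Hs; rewrite -(prednK M0) => HM1 HM2 Hsm Hs.
set M' := (ngroups n k).-1 in HM1 HM2 Hsm Hs *.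
rewrite big_ord_recr /= card_G_gen //.
have -> : minn n (M'.+1 * k) - minn n (M' * k) = n - M' * k by lia.
have E : forall j : 'I_M', #|[set i : 'I_n | val i %/ k == val (widen_ord (leqnSn M') j)]| = k.
  move=> j; rewrite card_G_gen //=.
  have jM := ltn_ord j.
  have : j.+1 * k <= M' * k by rewrite leq_mul2r jM orbT.
  rewrite mulSn => h; lia.
under eq_bigr => j _ do rewrite E.
have Hmem : nth 0 mu M' \in lam by rewrite -(perm_mem Hp) mem_nth // Hsm.
have Hck : ('C(k, nth 0 mu M')%:R : rat) != 0%R.
  by rewrite pnatr_eq0 -lt0n bin_gt0; move/allP: Hall => /(_ _ Hmem).
rewrite prodr_undup_exp_count -natr_prod -(perm_big _ Hp) /=.
rewrite (big_nth 0) Hsm big_mkord big_ord_recr /=.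
rewrite natrM mulrC -mulrA natrM mulfK //.
Qed.

Lemma size_perms_rem (lam : seq nat) l : l \in lam ->
  ((size (permutations (rem l lam)))%:R : rat) =
  (((size lam).-1)`!%:R / \prod_(l' <- undup lam) ((count_mem l' lam - (l' == l))`!)%:R)%R.
Proof.
move=> hl.
have := @size_perms_fact _ (undup lam) _ (rem l lam) (erefl _) (undup_uniq lam)
  (fun y yr => etrans (mem_undup lam y) (mem_rem yr)).
rewrite size_rem // => H.
have E : \prod_(x <- undup lam) (count_mem x (rem l lam))`! =
         \prod_(l' <- undup lam) (count_mem l' lam - (l' == l))`!.
  by apply: eq_bigr => x _; rewrite count_rem hl /= eq_sym.
rewrite E in H.
rewrite -H natrM -natr_prod mulfK //.
rewrite pnatr_eq0 -lt0n prodn_gt0 // => i; exact: fact_gt0.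
Qed.

Local Open Scope ring_scope.

Theorem lemma5 (n k : nat) (lam : seq nat) :
  (2 <= k)%N -> (k <= n)%N -> valid_partition n k lam ->
  beta n k lam =
  (('C(n, sumn lam))%:R)^-1 *
  \sum_(l <- undup lam)
     ((('C(last_size n k, l))%:R
        * (\prod_(l' <- undup lam) (('C(k, l'))%:R ^+ count_mem l' lam))
        / ('C(k, l))%:R)
      * (((ngroups n k).-1)`!%:R
         / (\prod_(l' <- undup lam) ((count_mem l' lam - (l' == l))`!)%:R)) : rat).
Proof.
move=> k2 kn /and3P [/eqP Hs Hall _].
have k0 : (0 < k)%N by apply: leq_trans k2.
have [M0 _ _] := ngroups_facts k0 kn.
set P := permutations lam.
have cardA : #|[set S : {set 'I_n} | (#|S| == sumn lam) && perm_eq (group_counts k S) lam]|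
    = (\sum_(mu <- P) #|[set S : {set 'I_n} | group_counts k S == mu]|)%N.
  rewrite -sum1_card big_mkcond /=.
  transitivity (\sum_(S : {set 'I_n}) \sum_(mu <- P) (if group_counts k S == mu then 1 else 0))%N.
    apply: eq_bigr => S _; rewrite inE -big_mkcond /= sum1_count.
    have -> : count (fun mu => group_counts k S == mu) P = count_mem (group_counts k S) P.
      by apply: eq_count => mu; rewrite /= eq_sym.
    rewrite count_uniq_mem ?permutations_uniq // mem_permutations.
    case Hpe: (perm_eq _ _); rewrite ?andbF ?andbT //.
    by rewrite (card_sumn S k0 kn) (perm_sumn Hpe) eqxx.
  rewrite exchange_big; apply: eq_bigr => mu _.
  rewrite -sum1_card [RHS]big_mkcond /=; apply: eq_bigr => S _; by rewrite inE.
rewrite /beta cardA natr_sum mulrC; congr (_ * _).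
set h := fun l : nat => ('C(last_size n k, l)%:R
   * (\prod_(l' <- undup lam) (('C(k, l'))%:R ^+ count_mem l' lam))
   / ('C(k, l))%:R : rat).
have s1 : \sum_(mu <- P) (#|[set S : {set 'I_n} | group_counts k S == mu]|%:R : rat)
        = \sum_(mu <- P) h (nth 0 mu (ngroups n k).-1).
  apply: eq_big_seq => mu; rewrite mem_permutations => Hp.
  by rewrite (card_mu k0 kn Hs Hall Hp).
rewrite s1.
have s2 : \sum_(mu <- P) h (nth 0 mu (ngroups n k).-1) = \sum_(mu <- map rev P) h (nth 0 mu 0).
  rewrite big_map; apply: eq_big_seq => mu; rewrite mem_permutations => Hp.
  have Hsm : size mu = ngroups n k by rewrite (perm_size Hp).
  by rewrite nth_rev ?Hsm // subn1.
rewrite s2.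
have Hperm : perm_eq (map rev P) P.
  apply: uniq_perm; first by rewrite (map_inj_uniq (can_inj revK)) permutations_uniq.
    exact: permutations_uniq.
  move=> mu; rewrite -{1}(revK mu) (mem_map (can_inj revK)) !mem_permutations.
  by rewrite perm_rev.
rewrite (perm_big _ Hperm) /=.
have lam0 : (0 < size lam)%N by rewrite Hs.
rewrite (perm_big _ (permutationsE lam0)) big_allpairs_dep /=.
apply: eq_big_seq => l; rewrite mem_undup => hl.
rewrite sumr_const_seq.
rewrite -[h l *+ _]mulr_natr size_perms_rem // Hs.
done.
Qed.
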